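(* With the notation of the context, there is a constant $L>0$ depending only on $a$ and $b$ such that for every integer $m\ge\max\{-\frac{3}{4\ln u},\frac1{6c}\}$, the truncated vector $\alpha$ defined by $\alpha_k=\nu_k$ for $k\le2m+1$ and $\alpha_k=0$ otherwise satisfies: (i) $\big|\|\alpha\|^2-\frac1{4a}\big|\le Lmu^{2m}$; (ii) $\alpha^\top\eta=0$; (iii) $\big|\alpha^\top M^\top M\alpha-1\big|\le Lm^2u^{2m}$; (iv) $\alpha^\top\mathrm{Diag}(\lambda)^{-1}\alpha\le Lm^{3/2}$.
   Context: Let $a,b>0$, $\mu=\mathcal N(0,1/(4a))$ on $\mathbb R$, $c=\sqrt{a^2+2ab}$, $u=\frac{b}{a+b+c}\in(0,1)$. $f_i(x)=(c/a)^{1/4}(2^ii!)^{-1/2}e^{-(c-a)x^2}H_i(\sqrt{2c}\,x)$ ($H_i$ physicists' Hermite polynomials) form an orthonormal basis of $L^2(\mu)$; $\lambda_i=\sqrt{\frac{2a}{a+b+c}}\,u^i$. $\eta_i=\int f_id\mu$: $\eta_{2k+1}=0$, $\eta_{2k}=(c/a)^{1/4}\sqrt{\frac{2a}{a+c}}u^k\frac{\sqrt{(2k)!}}{2^kk!}$. $M^\top M$ is the symmetric matrix with $(M^\top M)_{ii}=\frac1c(2i(a^2+c^2)+(a-c)^2)$, $(M^\top M)_{i,i+2}=(M^\top M)_{i+2,i}=\frac1c(a^2-c^2)\sqrt{(i+1)(i+2)}$, other entries zero (so $\mathbb E_\mu(f'^2)=\beta^\top M^\top M\beta$ for $f=\sum\beta_if_i$).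 $\nu$ is the coefficient vector of $f_*(x)=x$: $\nu_{2k}=0$, $\nu_{2k+1}=(c/a)^{1/4}\frac{\sqrt a}{2c}\big(\frac{2c}{a+c}\big)^{3/2}u^k\frac{\sqrt{(2k+1)!}}{2^kk!}$. *)

(* Defs.v *)
From Stdlib Require Import Reals Lra Lia Arith.
Open Scope R_scope.

Definition cst (a b : R) : R := sqrt (a ^ 2 + 2 * a * b).
Definition uu (a b : R) : R := b / (a + b + cst a b).

Definition lam (a b : R) (i : nat) : R :=
  sqrt (2 * a / (a + b + cst a b)) * uu a b ^ i.

(* eta_i = \int f_i dmu : eta_{2k+1} = 0,
   eta_{2k} = (c/a)^{1/4} sqrt(2a/(a+c)) u^k sqrt((2k)!)/(2^k k!) *)
Definition eta (a b : R) (i : nat) : R :=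
  if Nat.even i then
    let k := Nat.div2 i in
    Rpower (cst a b / a) (1/4) * sqrt (2 * a / (a + cst a b)) * uu a b ^ k
      * sqrt (INR (fact (2 * k))) / (2 ^ k * INR (fact k))
  else 0.

Definition MtM (a b : R) (i j : nat) : R :=
  let c := cst a b in
  if Nat.eqb i j then (2 * INR i * (a ^ 2 + c ^ 2) + (a - c) ^ 2) / c
  else if Nat.eqb j (i + 2) then (a ^ 2 - c ^ 2) * sqrt (INR ((i + 1) * (i + 2))) / c
  else if Nat.eqb i (j + 2) then (a ^ 2 - c ^ 2) * sqrt (INR ((j + 1) * (j + 2))) / c
  else 0.

(* coefficient vector nu of f_*(x) = x : nu_{2k} = 0,
   nu_{2k+1} = (c/a)^{1/4} sqrt(a)/(2c) (2c/(a+c))^{3/2} u^k sqrt((2k+1)!)/(2^k k!) *)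
Definition nu (a b : R) (i : nat) : R :=
  if Nat.even i then 0
  else
    let k := Nat.div2 i in
    let c := cst a b in
    Rpower (c / a) (1/4) * sqrt a / (2 * c) * Rpower (2 * c / (a + c)) (3/2)
      * uu a b ^ k * sqrt (INR (fact (2 * k + 1))) / (2 ^ k * INR (fact k)).

Definition alpha (a b : R) (m k : nat) : R :=
  if Nat.leb k (2 * m + 1) then nu a b k else 0.

(* Since alpha is supported on {0,...,2m+1}, all the (infinite) sums below
   reduce to finite sums over indices 0..2m+1 (sum_f_R0 f n has n+1 terms). *)
Definition sqnorm_alpha (a b : R) (m : nat) : R :=
  sum_f_R0 (fun k => alpha a b m k ^ 2) (2 * m + 1).

Definition alpha_dot_eta (a b : R) (m : nat) : R :=
  sum_f_R0 (fun k => alpha a b m k * eta a b k) (2 * m + 1).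

Definition alpha_MtM_alpha (a b : R) (m : nat) : R :=
  sum_f_R0 (fun i => sum_f_R0 (fun j =>
     alpha a b m i * MtM a b i j * alpha a b m j) (2 * m + 1)) (2 * m + 1).

Definition alpha_Diaginv_alpha (a b : R) (m : nat) : R :=
  sum_f_R0 (fun k => alpha a b m k ^ 2 / lam a b k) (2 * m + 1).

(* Main.v *)
Require Import Defs.
From Stdlib Require Import Reals Lra Lia Arith.
Open Scope R_scope.

Definition tt (k:nat) : R := INR (fact (2*k+1)) / (4^k * INR (fact k)^2).

Lemma fact_pos_R k : 0 < INR (fact k).
Proof. apply lt_0_INR, lt_O_fact. Qed.

Lemma tt_pos k : 0 < tt k.
Proof. unfold tt. pose proof (fact_pos_R (2*k+1)); pose proof (fact_pos_R k).
  apply Rdiv_lt_0_compat; auto. apply Rmult_lt_0_compat. apply pow_lt; lra. nra. Qed.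

Lemma tt_rec k : tt (S k) * (2*INR k + 2) = tt k * (2*INR k + 3).
Proof.
  unfold tt. replace (2 * S k + 1)%nat with (S (S (2*k+1))) by lia.
  rewrite !fact_simpl. rewrite !mult_INR. rewrite !S_INR. rewrite plus_INR, mult_INR.
  simpl INR. pose proof (fact_pos_R (2*k+1)); pose proof (fact_pos_R k).
  simpl pow. field. split. lra. split. apply pow_nonzero; lra. pose proof (pos_INR k); lra.
Qed.

Lemma tt0 : tt 0 = 1.
Proof. unfold tt. simpl. field. Qed.

Lemma tt_sq k : tt k ^ 2 <= 2 * INR k + 1.
Proof.
  induction k.
  - rewrite tt0. simpl. lra.
  - rewrite S_INR. pose proof (tt_rec k). pose proof (pos_INR k).
    assert (E : (tt (S k))^2 * (2*INR k+2)^2 = tt k ^2 * (2*INR k + 3)^2).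
    { rewrite <- !Rpow_mult_distr. rewrite H. reflexivity. }
    assert (tt k ^2 * (2*INR k + 3)^2 <= (2*INR k+1) * (2*INR k + 3)^2).
    { apply Rmult_le_compat_r. apply pow2_ge_0. auto. }
    assert ((2*INR k+1) * (2*INR k + 3)^2 <= (2*INR k+3) * (2*INR k + 2)^2) by nra.
    apply Rmult_le_reg_r with ((2*INR k+2)^2). nra. nra.
Qed.

Lemma tt_le k : tt k <= 2 * INR k + 1.
Proof. pose proof (tt_sq k). pose proof (tt_pos k). pose proof (pos_INR k). nra. Qed.

Definition T m x := sum_f_R0 (fun k => tt k * x^k) m.
Definition D m x := sum_f_R0 (fun k => INR k * tt k * x^(pred k)) m.

Lemma dl_eq f x l l' : derivable_pt_lim f x l -> l = l' -> derivable_pt_lim f x l'.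
Proof. intros H ->; exact H. Qed.

Lemma dl_ext f g x l : (forall y, f y = g y) -> derivable_pt_lim f x l -> derivable_pt_lim g x l.
Proof. intros E H. intros e He. destruct (H e He) as [d Hd]. exists d. intros h H1 H2.
  rewrite <- !E. apply Hd; auto. Qed.

Lemma T_deriv m x : derivable_pt_lim (T m) x (D m x).
Proof.
  induction m.
  - unfold T, D; simpl. apply dl_ext with (fun _ => tt 0 * 1). intro; reflexivity.
    apply dl_eq with 0. apply derivable_pt_lim_const. simpl; ring.
  - apply dl_ext with (fun y => T m y + tt (S m) * y^(S m)). intro; reflexivity.
    apply dl_eq with (D m x + tt (S m) * (INR (S m) * x ^ pred (S m))).
    apply (derivable_pt_lim_plus (T m) (fun y => tt (S m) * y ^ S m)); auto.
    apply (derivable_pt_lim_scal (fun y => y ^ S m)). apply derivable_pt_lim_pow.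
    unfold D. simpl pred. change (sum_f_R0 (fun k : nat => INR k * tt k * x ^ Init.Nat.pred k) (S m)) with (sum_f_R0 (fun k : nat => INR k * tt k * x ^ Init.Nat.pred k) m + INR (S m) * tt (S m) * x^m). ring.
Qed.

Lemma ode m x : (1-x) * D m x - 3/2 * T m x = -(INR m + 3/2) * tt m * x^m.
Proof.
  induction m.
  - unfold T, D; simpl. rewrite tt0. ring.
  - unfold T, D in *.
    change (sum_f_R0 (fun k : nat => INR k * tt k * x ^ Init.Nat.pred k) (S m)) with (sum_f_R0 (fun k : nat => INR k * tt k * x ^ Init.Nat.pred k) m + INR (S m) * tt (S m) * x^m).
    change (sum_f_R0 (fun k : nat => tt k * x ^ k) (S m)) with (sum_f_R0 (fun k : nat => tt k * x ^ k) m + tt (S m) * x^(S m)).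
    pose proof (tt_rec m). pose proof (pos_INR m). rewrite S_INR.
    transitivity (((1 - x) * sum_f_R0 (fun k : nat => INR k * tt k * x ^ Init.Nat.pred k) m -
     3 / 2 * sum_f_R0 (fun k : nat => tt k * x ^ k) m) + (1-x)*(INR m + 1) * tt (S m) * x^m - 3/2 * tt (S m) * x^(S m)).
    ring. rewrite IHm. simpl pow.
    replace (tt m) with (tt (S m) * (2 * INR m + 2) / (2 * INR m + 3)).
    field. lra. rewrite H. field. lra.
Qed.

Lemma T0 m : T m 0 = 1.
Proof. induction m. unfold T; simpl; rewrite tt0; ring. unfold T in *; simpl sum_f_R0. rewrite IHm. simpl; ring. Qed.

Definition h m s := T m s * ((1-s) * sqrt (1-s)).

Lemma g_deriv s : s < 1 -> derivable_pt_lim (fun y => (1-y) * sqrt (1-y)) s (-(3/2) * sqrt (1-s)).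
Proof.
  intro Hs.
  assert (Hl : derivable_pt_lim (fun y => 1 - y) s (-1)).
  { apply dl_eq with (0 - 1). apply (derivable_pt_lim_minus (fct_cte 1) id). apply derivable_pt_lim_const.
    apply derivable_pt_lim_id. ring. }
  assert (Hq : derivable_pt_lim (fun y => sqrt (1-y)) s (/(2*sqrt (1-s)) * -1)).
  { apply (derivable_pt_lim_comp (fun y => 1-y) sqrt). auto. apply derivable_pt_lim_sqrt. lra. }
  apply dl_eq with (-1 * sqrt (1-s) + (1-s) * (/(2*sqrt (1-s)) * -1)).
  apply (derivable_pt_lim_mult (fun y => 1 - y) (fun y => sqrt (1-y))); auto.
  assert (0 < sqrt (1-s)) by (apply sqrt_lt_R0; lra).
  replace (1 - s) with (sqrt (1-s) * sqrt (1-s)) at 2 by (apply sqrt_sqrt; lra).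
  field. lra.
Qed.

Lemma h_deriv m s : s < 1 -> derivable_pt_lim (h m) s (- sqrt (1-s) * (INR m + 3/2) * tt m * s^m).
Proof.
  intro Hs. unfold h.
  apply dl_eq with (D m s * ((1-s)*sqrt (1-s)) + T m s * (-(3/2) * sqrt (1-s))).
  apply (derivable_pt_lim_mult (T m) (fun y => (1-y) * sqrt (1-y))). apply T_deriv. apply g_deriv; auto.
  pose proof (ode m s).
  replace (- sqrt (1 - s) * (INR m + 3 / 2) * tt m * s ^ m) with (sqrt (1-s) * (-(INR m + 3/2) * tt m * s^m)) by ring.
  rewrite <- H. ring.
Qed.

Lemma h0 m : h m 0 = 1.
Proof. unfold h. rewrite T0. rewrite Rminus_0_r, sqrt_1. ring. Qed.

Lemma key m x : 0 < x < 1 -> h m x <= 1 /\ 1 - 3/2 * tt m * x^(S m) <= h m x.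
Proof.
  intros [H0 H1]. split.
  - destruct (MVT_cor2 (h m) (fun s => - sqrt (1-s) * (INR m + 3/2) * tt m * s^m) 0 x H0) as [c [Hc Hc2]].
    intros c Hc. apply h_deriv. lra.
    rewrite h0 in Hc. pose proof (sqrt_pos (1-c)). pose proof (tt_pos m). pose proof (pos_INR m).
    assert (0 <= c^m) by (apply pow_le; lra).
    assert (0 <= sqrt (1 - c) * (INR m + 3 / 2) * tt m * c ^ m).
    { apply Rmult_le_pos; [|auto]. apply Rmult_le_pos; [|lra]. apply Rmult_le_pos; lra. }
    nra.
  - set (G := fun s => h m s + 3/2 * tt m * s^(S m)).
    destruct (MVT_cor2 G (fun s => - sqrt (1-s) * (INR m + 3/2) * tt m * s^m + 3/2 * tt m * (INR (S m) * s^m)) 0 x H0) as [c [Hc Hc2]].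
    intros c Hc. unfold G. apply (derivable_pt_lim_plus (h m) (fun s => 3/2 * tt m * s^(S m))).
    apply h_deriv; lra. apply (derivable_pt_lim_scal (fun s => s^(S m))). apply derivable_pt_lim_pow.
    unfold G in Hc. rewrite h0 in Hc. simpl (0 ^ S m) in Hc.
    assert (sqrt (1-c) <= 1). { rewrite <- sqrt_1 at 2. apply sqrt_le_1_alt. lra. }
    pose proof (sqrt_pos (1-c)). pose proof (tt_pos m). pose proof (pos_INR m).
    assert (0 <= c^m) by (apply pow_le; lra). rewrite S_INR in Hc.
    assert (0 <= (- sqrt (1 - c) * (INR m + 3 / 2) * tt m * c ^ m + 3 / 2 * tt m * ((INR m + 1) * c ^ m))).
    { assert (Eq : - sqrt (1 - c) * (INR m + 3 / 2) * tt m * c ^ m + 3 / 2 * tt m * ((INR m + 1) * c ^ m)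
        = tt m * c^m * ((INR m + 3/2) * (1 - sqrt (1-c)) + INR m / 2)). field.
      rewrite Eq.
      apply Rmult_le_pos. apply Rmult_le_pos; lra. assert (0 <= 1 - sqrt (1-c)) by lra. apply Rplus_le_le_0_compat. apply Rmult_le_pos; lra. lra. }
    nra.
Qed.

Lemma even_double k : Nat.even (2*k) = true.
Proof. rewrite Nat.even_mul. reflexivity. Qed.
Lemma even_double1 k : Nat.even (2*k+1) = false.
Proof. rewrite Nat.even_add, Nat.even_mul. reflexivity. Qed.
Lemma div2_double1 k : Nat.div2 (2*k+1) = k.
Proof. rewrite Nat.add_1_r. apply Nat.div2_succ_double. Qed.

Definition Kc a b := Rpower (cst a b / a) (1/4) * sqrt a / (2 * cst a b) * Rpower (2 * cst a b / (a + cst a b)) (3/2).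

Lemma nu_odd a b k : nu a b (2*k+1) = Kc a b * uu a b ^ k * sqrt (INR (fact (2*k+1))) / (2^k * INR (fact k)).
Proof. unfold nu. rewrite even_double1, div2_double1. reflexivity. Qed.
Lemma nu_even a b k : nu a b (2*k) = 0.
Proof. unfold nu. rewrite even_double. reflexivity. Qed.

Lemma nu_sq a b k : nu a b (2*k+1) ^ 2 = Kc a b ^ 2 * tt k * (uu a b ^ 2) ^ k.
Proof.
  rewrite nu_odd. unfold tt. replace ((uu a b ^ 2) ^ k) with ((uu a b ^ k)^2) by (rewrite <- !pow_mult; f_equal; lia).
  pose proof (fact_pos_R (2*k+1)); pose proof (fact_pos_R k).
  assert (E : sqrt (INR (fact (2*k+1))) ^ 2 = INR (fact (2*k+1))) by (apply pow2_sqrt; lra).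
  assert (E4 : (4:R)^k = (2^k)^2). { rewrite <- pow_mult, Nat.mul_comm, pow_mult. f_equal. ring. }
  rewrite E4. set (r := sqrt (INR (fact (2 * k + 1)))) in *. clearbody r. rewrite <- E. field. split. lra. apply pow_nonzero; lra.
Qed.

Lemma nu_prod a b k : sqrt (INR ((2*k+1+1)*(2*k+1+2))) * nu a b (2*k+1) * nu a b (2*(S k)+1)
   = Kc a b ^ 2 * uu a b ^ (2*k+1) * (2*(INR k+1)*tt (S k)).
Proof.
  rewrite !nu_odd. pose proof (tt_rec k).
  replace (2 * (INR k + 1) * tt (S k)) with (tt k * (2 * INR k + 3)) by (rewrite <- H; ring).
  unfold tt.
  assert (Ef : INR (fact (2 * S k + 1)) = INR ((2*k+1+1)*(2*k+1+2)) * INR (fact (2*k+1))).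
  { rewrite <- mult_INR. f_equal. replace (2 * S k + 1)%nat with (S (S (2*k+1))) by lia.
    rewrite !fact_simpl. replace (2 * k + 1 + 1)%nat with (S (2*k+1)) by lia.
    replace (2 * k + 1 + 2)%nat with (S (S (2*k+1))) by lia. ring. }
  rewrite Ef. pose proof (fact_pos_R (2*k+1)); pose proof (fact_pos_R k).
  assert (0 <= INR ((2 * k + 1 + 1) * (2 * k + 1 + 2))) by apply pos_INR.
  rewrite sqrt_mult; [|lra|lra].
  set (r1 := sqrt (INR (fact (2 * k + 1)))). set (r2 := sqrt (INR ((2 * k + 1 + 1) * (2 * k + 1 + 2)))).
  assert (Hr1 : r1 * r1 = INR (fact (2 * k + 1))) by (apply sqrt_sqrt; lra).
  assert (Hr2 : r2 * r2 = INR ((2 * k + 1 + 1) * (2 * k + 1 + 2))) by (apply sqrt_sqrt; lra).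
  pose proof (pos_INR k). clearbody r1 r2.
  assert (F1 : INR (fact (S k)) = (INR k + 1) * INR (fact k)).
  { replace (fact (S k)) with ((S k) * fact k)%nat by reflexivity. rewrite mult_INR, S_INR. ring. }
  rewrite F1.
  transitivity (Kc a b ^2 * uu a b ^ k * uu a b ^ (S k) * (r2*r2) * (r1*r1) / (2^k * INR (fact k) * (2^(S k) * ((INR k + 1) * INR (fact k))))).
  field; repeat split; try lra; try (apply pow_nonzero; lra).
  rewrite Hr2. rewrite mult_INR, !plus_INR, mult_INR.
  assert (I2 : INR 2 = 2) by (simpl; ring). assert (I1 : INR 1 = 1) by reflexivity. rewrite I2, I1.
  assert (E4 : (4:R)^k = (2^k)^2). { rewrite <- pow_mult, Nat.mul_comm, pow_mult. f_equal. ring. }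
  rewrite E4. replace (uu a b ^ (2*k+1)) with (uu a b ^ k * uu a b ^ S k) by (rewrite <- pow_add; f_equal; lia).
  rewrite Hr1. change (2 ^ S k) with (2 * 2 ^ k). change (uu a b ^ S k) with (uu a b * uu a b ^ k).
  field; repeat split; try lra; try (apply pow_nonzero; lra).
Qed.

Lemma sum_pairs f m : sum_f_R0 f (2*m+1) = sum_f_R0 (fun k => f (2*k)%nat + f (2*k+1)%nat) m.
Proof.
  induction m. reflexivity.
  replace (2 * S m + 1)%nat with (S (S (2*m+1))) by lia. rewrite !tech5. rewrite IHm.
  replace (S (2*m+1)) with (2 * S m)%nat by lia. replace (S (2 * S m)) with (2*S m+1)%nat by lia. ring.
Qed.

Lemma c_props a b : 0 < a -> 0 < b -> 0 < cst a b /\ cst a b ^2 = a^2 + 2*a*b /\ a < cst a b.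
Proof.
  intros Ha Hb. unfold cst. assert (0 < a^2 + 2*a*b) by nra.
  split. apply sqrt_lt_R0; auto. split. apply pow2_sqrt; lra.
  rewrite <- (sqrt_pow2 a) at 1 by lra. apply sqrt_lt_1_alt. split. nra. nra.
Qed.

Lemma u_eq a b : 0 < a -> 0 < b -> uu a b = (cst a b - a) / (cst a b + a).
Proof.
  intros Ha Hb. destruct (c_props a b Ha Hb) as [Hc [Hc2 Hac]]. unfold uu.
  set (c := cst a b) in *. clearbody c. field_simplify_eq; [nra|lra].
Qed.

Lemma u_bounds a b : 0 < a -> 0 < b -> 0 < uu a b < 1.
Proof.
  intros Ha Hb. destruct (c_props a b Ha Hb) as [Hc [Hc2 Hac]]. rewrite u_eq by auto.
  set (c := cst a b) in *. clearbody c. split. apply Rdiv_lt_0_compat; lra.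
  apply Rmult_lt_reg_r with (c+a). lra. field_simplify; lra.
Qed.

Lemma Rpow_sq y e : Rpower y e ^ 2 = Rpower y (2*e).
Proof. simpl. rewrite Rmult_1_r, <- Rpower_plus. f_equal. ring. Qed.

Lemma K2 a b : 0 < a -> 0 < b -> 4 * a * Kc a b ^ 2 = (1 - uu a b ^ 2) * sqrt (1 - uu a b ^ 2).
Proof.
  intros Ha Hb. destruct (c_props a b Ha Hb) as [Hc [Hc2 Hac]]. rewrite u_eq by auto.
  assert (EK : Kc a b ^ 2 = Rpower (cst a b / a) (1/4) ^ 2 * sqrt a ^ 2 / (4 * cst a b ^ 2) * Rpower (2 * cst a b / (a + cst a b)) (3/2) ^ 2)
    by (unfold Kc; field; lra).
  rewrite EK. set (c := cst a b) in *. clearbody c.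
  rewrite !Rpow_sq.
  replace (2 * (1/4)) with (/2) by field. rewrite Rpower_sqrt by (apply Rdiv_lt_0_compat; lra).
  replace (2 * (3/2)) with (INR 3) by (simpl; field). rewrite Rpower_pow by (apply Rdiv_lt_0_compat; lra).
  rewrite sqrt_div_alt by lra.
  set (pa := sqrt a). set (pc := sqrt c).
  assert (Ea : pa ^ 2 = a) by (apply pow2_sqrt; lra). assert (Ec : pc ^ 2 = c) by (apply pow2_sqrt; lra).
  assert (Pa : 0 < pa) by (apply sqrt_lt_R0; lra). assert (Pc : 0 < pc) by (apply sqrt_lt_R0; lra).
  assert (E1 : 1 - ((c - a) / (c + a)) ^ 2 = (2 * pa * pc / (a + c))^2).
  { field_simplify_eq; [|lra]. rewrite Ea, Ec. ring. }
  rewrite E1. rewrite sqrt_pow2 by (apply Rlt_le, Rdiv_lt_0_compat; nra).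
  clearbody pa pc. subst a c. field. lra.
Qed.

Lemma sum_zero n : sum_f_R0 (fun _ => 0) n = 0.
Proof. induction n; simpl; [ring| rewrite IHn; ring]. Qed.

Lemma part_ii a b m : alpha_dot_eta a b m = 0.
Proof.
  unfold alpha_dot_eta. rewrite <- (sum_zero (2*m+1)). apply sum_eq. intros k _.
  unfold alpha, eta, nu. destruct (Nat.even k); destruct (Nat.leb k (2*m+1)); simpl; ring.
Qed.

Lemma alpha_even a b m k : alpha a b m (2*k) = 0.
Proof. unfold alpha. rewrite nu_even. destruct (Nat.leb _ _); reflexivity. Qed.
Lemma alpha_odd a b m k : (k <= m)%nat -> alpha a b m (2*k+1) = nu a b (2*k+1).
Proof. intro. unfold alpha. replace (Nat.leb (2*k+1) (2*m+1)) with true. reflexivity.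
  symmetry. apply Nat.leb_le. lia. Qed.

Lemma part_i a b m : sqnorm_alpha a b m = Kc a b ^ 2 * T m (uu a b ^ 2).
Proof.
  unfold sqnorm_alpha, T. rewrite sum_pairs. rewrite scal_sum. apply sum_eq. intros k Hk.
  rewrite alpha_even, alpha_odd by auto. rewrite nu_sq. ring.
Qed.

Lemma part_iv a b m : 0 < a -> 0 < b -> alpha_Diaginv_alpha a b m =
   Kc a b ^ 2 / (sqrt (2 * a / (a + b + cst a b)) * uu a b) * sum_f_R0 tt m.
Proof.
  intros Ha Hb. destruct (c_props a b Ha Hb) as [Hc [Hc2 Hac]]. pose proof (u_bounds a b Ha Hb).
  assert (0 < sqrt (2 * a / (a + b + cst a b))). { apply sqrt_lt_R0. apply Rdiv_lt_0_compat; lra. }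
  unfold alpha_Diaginv_alpha. rewrite sum_pairs. rewrite scal_sum. apply sum_eq. intros k Hk.
  rewrite alpha_even, alpha_odd by auto. rewrite nu_sq. unfold lam.
  replace (uu a b ^ (2*k+1)) with ((uu a b ^ 2)^k * uu a b) by (rewrite <- pow_mult, Nat.add_1_r, <- tech_pow_Rmult; ring).
  field; repeat split; try lra; try (apply pow_nonzero; lra). apply pow_nonzero, pow_nonzero; lra.
Qed.

Definition dd a b i := (2 * INR i * (a ^ 2 + cst a b ^ 2) + (a - cst a b) ^ 2) / cst a b.
Definition ee a b i := (a ^ 2 - cst a b ^ 2) * sqrt (INR ((i + 1) * (i + 2))) / cst a b.

Lemma MtM_split a b (f : nat -> R) i j :
  MtM a b i j * f j = (if Nat.eqb j i then dd a b i * f i else 0)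
     + (if Nat.eqb j (i+2) then ee a b i * f (i+2)%nat else 0)
     + (if Nat.eqb i (j+2) then ee a b j * f j else 0).
Proof.
  unfold MtM, dd, ee.
  destruct (Nat.eqb_spec i j); destruct (Nat.eqb_spec j i); destruct (Nat.eqb_spec j (i+2)); destruct (Nat.eqb_spec i (j+2));
   try lia; subst; ring.
Qed.

Lemma sum_ind (A : R) p N : sum_f_R0 (fun j => if Nat.eqb j p then A else 0) N = if Nat.leb p N then A else 0.
Proof.
  induction N.
  - simpl. destruct p; simpl; reflexivity.
  - rewrite tech5, IHN. destruct (Nat.eqb_spec (S N) p).
    + subst. replace (Nat.leb (S N) N) with false by (symmetry; apply Nat.leb_gt; lia).
      replace (Nat.leb (S N) (S N)) with true by (symmetry; apply Nat.leb_le; lia). ring.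
    + destruct (Nat.leb_spec p N); destruct (Nat.leb_spec p (S N)); try lia; ring.
Qed.

Lemma row a b m k : (k <= m)%nat ->
  sum_f_R0 (fun j => MtM a b (2*k+1) j * alpha a b m j) (2*m+1)
  = dd a b (2*k+1) * nu a b (2*k+1) + ee a b (2*k+1) * alpha a b m (2*k+1+2)
    + (match k with O => 0 | S k' => ee a b (2*k'+1) * nu a b (2*k'+1) end).
Proof.
  intro Hk.
  rewrite (sum_eq _ (fun j => (if Nat.eqb j (2*k+1) then dd a b (2*k+1) * alpha a b m (2*k+1) else 0)
     + (if Nat.eqb j (2*k+1+2) then ee a b (2*k+1) * alpha a b m (2*k+1+2)%nat else 0)
     + (match k with O => 0 | S k' => if Nat.eqb j (2*k'+1) then ee a b (2*k'+1) * alpha a b m (2*k'+1) else 0 end))).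
  2:{ intros j _. rewrite MtM_split. f_equal. destruct k.
      - destruct (Nat.eqb_spec (2*0+1) (j+2)); [lia|reflexivity].
      - destruct (Nat.eqb_spec (2*S k+1) (j+2)); destruct (Nat.eqb_spec j (2*k+1)); try lia.
        subst. reflexivity. reflexivity. }
  rewrite !sum_plus, !sum_ind. rewrite alpha_odd by auto.
  replace (Nat.leb (2*k+1) (2*m+1)) with true by (symmetry; apply Nat.leb_le; lia).
  f_equal.
  - destruct (Nat.leb_spec (2*k+1+2) (2*m+1)). reflexivity.
    unfold alpha. replace (Nat.leb (2*k+1+2) (2*m+1)) with false by (symmetry; apply Nat.leb_gt; lia). ring.
  - destruct k. rewrite sum_zero. reflexivity. rewrite sum_ind.
    replace (Nat.leb (2*k+1) (2*m+1)) with true by (symmetry; apply Nat.leb_le; lia).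
    rewrite alpha_odd by lia. reflexivity.
Qed.

Definition AA a b k := dd a b (2*k+1) * nu a b (2*k+1) ^ 2.
Definition BB a b k := ee a b (2*k+1) * nu a b (2*k+1) * nu a b (2*(S k)+1).

Lemma Q_sum a b m : alpha_MtM_alpha a b m =
  sum_f_R0 (fun k => AA a b k + (if Nat.ltb k m then BB a b k else 0)
                 + match k with O => 0 | S k' => BB a b k' end) m.
Proof.
  unfold alpha_MtM_alpha. rewrite sum_pairs. apply sum_eq. intros k Hk.
  rewrite (sum_eq (fun j => alpha a b m (2*k) * MtM a b (2*k) j * alpha a b m j) (fun _ => 0)).
  2:{ intros; rewrite alpha_even; ring. }
  rewrite sum_zero.
  rewrite (sum_eq (fun j => alpha a b m (2*k+1) * MtM a b (2*k+1) j * alpha a b m j)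
     (fun j => MtM a b (2*k+1) j * alpha a b m j * alpha a b m (2*k+1))).
  2:{ intros; ring. }
  rewrite <- scal_sum. rewrite row by auto. rewrite alpha_odd by auto.
  unfold AA, BB.
  assert (Ea : alpha a b m (2*k+1+2) = if Nat.ltb k m then nu a b (2*(S k)+1) else 0).
  { unfold alpha. replace (2*k+1+2)%nat with (2*(S k)+1)%nat by lia.
    destruct (Nat.ltb_spec k m); destruct (Nat.leb_spec (2*S k+1) (2*m+1)); try lia; reflexivity. }
  rewrite Ea. destruct (Nat.ltb k m); destruct k; try ring.
Qed.

Lemma sum_shift (A B : nat -> R) m' :
  sum_f_R0 (fun k => A k + (if Nat.ltb k (S m') then B k else 0)
                 + match k with O => 0 | S k' => B k' end) (S m')
  = sum_f_R0 A (S m') + 2 * sum_f_R0 B m'.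
Proof.
  rewrite !sum_plus.
  assert (E1 : sum_f_R0 (fun k => if Nat.ltb k (S m') then B k else 0) (S m') = sum_f_R0 B m').
  { rewrite tech5. replace (Nat.ltb (S m') (S m')) with false by (symmetry; apply Nat.ltb_ge; lia).
    rewrite Rplus_0_r. apply sum_eq. intros i Hi.
    replace (Nat.ltb i (S m')) with true by (symmetry; apply Nat.ltb_lt; lia). reflexivity. }
  assert (E2 : sum_f_R0 (fun k => match k with O => 0 | S k' => B k' end) (S m') = sum_f_R0 B m').
  { rewrite decomp_sum by lia. simpl pred. rewrite Rplus_0_l. reflexivity. }
  rewrite E1, E2. ring.
Qed.

Lemma LD1 m x : sum_f_R0 (fun k => INR k * tt k * x^k) m = x * D m x.
Proof.
  induction m. unfold D. simpl. ring.
  rewrite tech5, IHm. unfold D. rewrite tech5. simpl pred. simpl pow. ring.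
Qed.

Lemma LD2 m x : D (S m) x = sum_f_R0 (fun k => INR (S k) * tt (S k) * x^k) m.
Proof.
  induction m. unfold D. simpl. ring.
  unfold D in *. rewrite tech5, IHm. rewrite (tech5 _ m). reflexivity.
Qed.

Lemma sum_scal (c : R) f n : sum_f_R0 (fun k => c * f k) n = c * sum_f_R0 f n.
Proof. rewrite scal_sum. apply sum_eq. intros; ring. Qed.

Lemma Q_closed a b m : 0 < a -> 0 < b -> (1 <= m)%nat ->
  alpha_MtM_alpha a b m = h m (uu a b ^ 2)
     + (2 * INR m + 3) * tt m * (uu a b ^ 2) ^ (S m) * sqrt (1 - uu a b ^ 2).
Proof.
  intros Ha Hb Hm. destruct m as [|m']; [lia|].
  destruct (c_props a b Ha Hb) as [Hc [Hc2 Hac]]. pose proof (u_bounds a b Ha Hb) as Hu.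
  pose proof (K2 a b Ha Hb) as HK. pose proof (u_eq a b Ha Hb) as Hue.
  set (u := uu a b) in *. set (c := cst a b) in *. set (x := u^2) in *.
  rewrite Q_sum, sum_shift.
  rewrite (sum_eq (AA a b) (fun k => (Kc a b ^2 / c * (4 * (a^2 + c^2))) * (INR k * tt k * x^k)
                                   + (Kc a b ^2 / c * (2*(a^2+c^2) + (a-c)^2)) * (tt k * x^k))).
  2:{ intros k _. unfold AA, dd. rewrite nu_sq. fold u c x. rewrite plus_INR, mult_INR.
      simpl (INR 2). simpl (INR 1). field. lra. }
  rewrite sum_plus, !sum_scal, LD1.
  rewrite (sum_eq (BB a b) (fun k => ((a^2 - c^2) / c * Kc a b ^ 2 * u * 2) * (INR (S k) * tt (S k) * x^k))).
  2:{ intros k _. unfold BB, ee. fold c.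
      transitivity ((a^2 - c^2) / c * (sqrt (INR ((2*k+1+1)*(2*k+1+2))) * nu a b (2*k+1) * nu a b (2*(S k)+1))).
      field; lra. rewrite nu_prod. fold u c. rewrite S_INR.
      replace (u ^ (2*k+1)) with (u * x^k) by (unfold x; rewrite <- pow_mult, Nat.add_1_r, <- tech_pow_Rmult; ring).
      field; lra. }
  rewrite sum_scal, <- LD2.
  fold (T (S m') x).
  pose proof (ode (S m') x) as Hode.
  unfold h. fold x.
  set (r := sqrt (1 - x)) in *. set (K := Kc a b) in *. set (TT := T (S m') x) in *. set (DD := D (S m') x) in *.
  assert (Hx1 : x < 1) by (unfold x; nra). assert (Hx0 : 0 < x) by (unfold x; nra).
  assert (Hr : 0 < r) by (unfold r; apply sqrt_lt_R0; lra).
  assert (Hxu : x = u^2) by reflexivity. clearbody r K TT DD x u c.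
  assert (HD : DD = (3/2 * TT - (INR (S m') + 3/2) * tt (S m') * x ^ S m') / (1 - x)) by (field_simplify_eq; lra).
  assert (HK2 : K^2 = (1 - x) * r / (4 * a)) by (field_simplify_eq; lra).
  rewrite HD, HK2. change (x ^ S (S m')) with (x * x ^ S m'). generalize (x ^ S m'); intro P. rewrite Hxu, Hue. simpl (_ ^ S (S m')). rewrite S_INR. 
  field. repeat split; nra.
Qed.

Lemma sum_le_const f B n : (forall k, (k <= n)%nat -> f k <= B) -> sum_f_R0 f n <= (INR n + 1) * B.
Proof.
  induction n; intro H.
  - simpl. specialize (H 0%nat (le_n 0)). lra.
  - rewrite tech5, S_INR. assert (sum_f_R0 f n <= (INR n + 1) * B) by (apply IHn; intros; apply H; lia).
    specialize (H (S n) (le_n _)). lra.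
Qed.

Lemma tt_sqrt k : tt k <= sqrt (2 * INR k + 1).
Proof.
  pose proof (tt_pos k). rewrite <- (sqrt_pow2 (tt k)) by lra. apply sqrt_le_1_alt. apply tt_sq.
Qed.

Lemma Rpower32 M : 0 < M -> Rpower M (3/2) = M * sqrt M.
Proof. intro. replace (3/2) with (1 + /2) by field. rewrite Rpower_plus, Rpower_1, Rpower_sqrt; auto. Qed.

Theorem mainTheorem16 :
  forall a b : R, 0 < a -> 0 < b ->
  exists L : R, 0 < L /\
    forall m : nat,
      Rmax (- 3 / (4 * ln (uu a b))) (1 / (6 * cst a b)) <= INR m ->
      Rabs (sqnorm_alpha a b m - 1 / (4 * a)) <= L * INR m * uu a b ^ (2 * m) /\
      alpha_dot_eta a b m = 0 /\
      Rabs (alpha_MtM_alpha a b m - 1) <= L * INR m ^ 2 * uu a b ^ (2 * m) /\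
      alpha_Diaginv_alpha a b m <= L * Rpower (INR m) (3 / 2).
Proof.
  intros a b Ha Hb.
  destruct (c_props a b Ha Hb) as [Hc [Hc2 Hac]]. pose proof (u_bounds a b Ha Hb) as Hu.
  pose proof (K2 a b Ha Hb) as HK.
  set (sg := sqrt (2 * a / (a + b + cst a b))).
  assert (Hsg : 0 < sg). { apply sqrt_lt_R0. apply Rdiv_lt_0_compat; lra. }
  assert (HK0 : 0 <= Kc a b ^ 2) by apply pow2_ge_0.
  assert (HW : 0 <= Kc a b ^ 2 / (sg * uu a b)). { unfold Rdiv. apply Rmult_le_pos; [lra|]. left; apply Rinv_0_lt_compat, Rmult_lt_0_compat; lra. }
  exists (9 / (8 * a) + 20 + 4 * (Kc a b ^ 2 / (sg * uu a b))).
  assert (H9 : 0 < 9 / (8 * a)) by (apply Rdiv_lt_0_compat; lra).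
  split. lra.
  intros m Hm.
  assert (HM : 0 < INR m).
  { eapply Rlt_le_trans; [|exact Hm]. eapply Rlt_le_trans; [|apply Rmax_r].
    apply Rdiv_lt_0_compat; lra. }
  assert (Hm1 : (1 <= m)%nat). { destruct m. simpl in HM; lra. lia. }
  assert (HM1 : 1 <= INR m). { replace 1 with (INR 1) by reflexivity. apply le_INR; auto. }
  set (M := INR m) in *.
  set (u := uu a b) in *. set (x := u ^ 2) in *.
  assert (Hx : 0 < x < 1) by (unfold x; split; nra).
  assert (Hxm : u ^ (2 * m) = x ^ m) by (unfold x; rewrite pow_mult; reflexivity).
  rewrite Hxm.
  assert (Hxm0 : 0 <= x ^ m) by (apply pow_le; lra).
  assert (HxS : x ^ S m <= x ^ m) by (simpl; nra).
  assert (HxS0 : 0 <= x ^ S m) by (apply pow_le; lra).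
  destruct (key m x Hx) as [Hh1 Hh2].
  pose proof (tt_le m) as Ht. pose proof (tt_pos m) as Ht0. fold M in Ht.
  assert (Hr1 : sqrt (1 - x) <= 1). { rewrite <- sqrt_1 at 2. apply sqrt_le_1_alt. lra. }
  assert (Hr0 : 0 <= sqrt (1 - x)) by apply sqrt_pos.
  assert (Hh : h m x = T m x * ((1 - x) * sqrt (1 - x))) by reflexivity.
  assert (Htx : tt m * x ^ S m <= 3 * M * x ^ m).
  { apply Rle_trans with (tt m * x ^ m). apply Rmult_le_compat_l; lra. apply Rmult_le_compat_r; lra. }
  split; [|split; [|split]].
  - rewrite part_i. fold u x.
    assert (E : Kc a b ^ 2 * T m x = h m x / (4 * a)).
    { rewrite Hh. rewrite <- HK. fold u x. field. lra. }
    rewrite E. rewrite Rabs_left1.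
    2:{ apply Rle_minus. apply Rmult_le_compat_r. left; apply Rinv_0_lt_compat; lra. lra. }
    assert (- (h m x / (4 * a) - 1 / (4 * a)) = (1 - h m x) / (4 * a)) by (field; lra).
    rewrite H. apply Rle_trans with (9 / (8 * a) * M * x ^ m).
    + apply Rle_trans with ((3/2 * (3 * M * x ^ m)) / (4 * a)).
      apply Rmult_le_compat_r. left; apply Rinv_0_lt_compat; lra. lra.
      apply Req_le. field. lra.
    + apply Rmult_le_compat_r; [lra|]. apply Rmult_le_compat_r; lra.
  - apply part_ii.
  - rewrite Q_closed by auto. fold u x.
    assert (Hb2 : (2 * M + 3) * tt m * x ^ S m * sqrt (1 - x) <= (2 * M + 3) * (3 * M * x ^ m)).
    { assert (tt m * x ^ S m * sqrt (1 - x) <= tt m * x ^ S m * 1).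
      { apply Rmult_le_compat_l. apply Rmult_le_pos; lra. lra. }
      replace ((2 * M + 3) * tt m * x ^ S m * sqrt (1 - x)) with ((2 * M + 3) * (tt m * x ^ S m * sqrt (1 - x))) by ring.
      apply Rmult_le_compat_l. lra. lra. }
    assert (Hb3 : 0 <= (2 * M + 3) * tt m * x ^ S m * sqrt (1 - x)).
    { apply Rmult_le_pos; [|lra]. apply Rmult_le_pos; [|lra]. apply Rmult_le_pos; lra. }
    apply Rle_trans with ((1 - h m x) + (2 * M + 3) * tt m * x ^ S m * sqrt (1 - x)).
    { apply Rabs_le. fold M. split; lra. }
    apply Rle_trans with (20 * M ^ 2 * x ^ m).
    { assert (Hy : 0 <= M * x^m) by nra. assert (Hy2 : M * x^m <= M * (M * x^m)) by nra.
      replace (20 * M ^ 2 * x ^ m) with (20 * (M * (M * x^m))) by ring.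
      replace ((2 * M + 3) * (3 * M * x ^ m)) with (6 * (M * (M * x^m)) + 9 * (M * x^m)) in Hb2 by ring.
      replace (3 * M * x ^ m) with (3 * (M * x^m)) in Htx by ring.
      set (y := M * x^m) in *. set (z := M * y) in *. set (w := tt m * x ^ S m) in *.
      assert (1 - h m x <= 3/2 * w) by (unfold w; lra). lra. }
    apply Rmult_le_compat_r; [lra|]. apply Rmult_le_compat_r. apply pow2_ge_0.
    assert (0 <= 4 * (Kc a b ^ 2 / (sg * u))) by lra. lra.
  - rewrite part_iv by auto. fold sg u. rewrite Rpower32 by auto.
    assert (HS : sum_f_R0 tt m <= (M + 1) * sqrt (2 * M + 1)).
    { apply sum_le_const. intros k Hk. eapply Rle_trans. apply tt_sqrt. apply sqrt_le_1_alt.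
      pose proof (le_INR _ _ Hk). fold M in H. lra. }
    assert (Hs2 : sqrt (2 * M + 1) <= 2 * sqrt M).
    { pose proof (sqrt_pos M). rewrite <- (sqrt_pow2 (2 * sqrt M)) by lra. apply sqrt_le_1_alt.
      replace ((2 * sqrt M) ^ 2) with (4 * (sqrt M * sqrt M)) by ring. rewrite sqrt_sqrt; lra. }
    assert (HS2 : sum_f_R0 tt m <= 4 * (M * sqrt M)).
    { pose proof (sqrt_pos (2*M+1)). eapply Rle_trans. apply HS. nra. }
    apply Rle_trans with (Kc a b ^ 2 / (sg * u) * (4 * (M * sqrt M))).
    apply Rmult_le_compat_l; auto.
    assert (0 <= M * sqrt M) by (pose proof (sqrt_pos M); nra). nra.
Qed.
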